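(* Let $n\ge 1$, $y\in\mathbb{R}^n$ and $\lambda\ge 0$, and let $$\hat\theta^{(\lambda)}=\operatorname{argmin}_{\theta\in\mathbb{R}^n}\ \frac12\sum_{i=1}^n (y_i-\theta_i)^2+\lambda\sum_{i=1}^{n-1}|\theta_{i+1}-\theta_i|$$ be the (univariate) Total Variation Denoising / Fused Lasso estimator. Then for every $i\in[n]$, $$\max_{J\in\mathcal{I}:\, i\in J}\ \min_{I\in\mathcal{I}:\, i\in I,\ I\subseteq J}\Big[\overline{y}_I+C_{I,J}\frac{2\lambda}{|I|}\Big]\ \le\ \hat\theta^{(\lambda)}_i\ \le\ \min_{J\in\mathcal{I}:\, i\in J}\ \max_{I\in\mathcal{I}:\, i\in I,\ I\subseteq J}\Big[\overline{y}_I-C_{I,J}\frac{2\lambda}{|I|}\Big].$$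
   Context: $[n]=\{1,\dots,n\}$. An interval of $[n]$ is a set $[a:b]=\{a,a+1,\dots,b\}$ with $1\le a\le b\le n$; $\mathcal{I}$ denotes the set of all intervals of $[n]$, and $|I|$ the cardinality of $I$. For $I\subseteq[n]$, $\overline{y}_I$ is the average of the entries $y_j$, $j\in I$. For intervals $I\subseteq J$, with $J=[j_1:j_2]$: $C_{I,J}=1$ if $I$ contains neither endpoint $j_1$ nor $j_2$ of $J$; $C_{I,J}=-1$ if $I=J$; and $C_{I,J}=0$ otherwise. *)

(* Defs.v *)
From HB Require Import structures.
From mathcomp Require Import all_boot all_order all_algebra.
From mathcomp Require Import reals.
Set Implicit Arguments. Unset Strict Implicit. Unset Printing Implicit Defensive.
Import Order.TTheory GRing.Theory Num.Theory.
Local Open Scope ring_scope.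

(* Indices are 0-based: [n] = {1..n} is represented by 'I_n = {0..n-1}.
   An interval [a:b] (a <= b) of [n] is represented by the pair (a, b). *)
Definition itv (n : nat) := ('I_n * 'I_n)%type.

Definition in_itv n (j : 'I_n) (I : itv n) : bool := (I.1 <= j <= I.2)%N.

(* [a:b] \subseteq [c:d]  (for nonempty intervals) *)
Definition sub_itv n (I J : itv n) : bool := (J.1 <= I.1)%N && (I.2 <= J.2)%N.

Definition itv_len n (I : itv n) : nat := (I.2 - I.1).+1.

Section Defs.
Variable R : realType.

Definition itv_mean n (y : 'I_n -> R) (I : itv n) : R :=
  (\sum_(j : 'I_n | in_itv j I) y j) / (itv_len I)%:R.

Definition Cc n (I J : itv n) : R :=
  if I == J then -1
  else if ~~ in_itv J.1 I && ~~ in_itv J.2 I then 1 else 0.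

Definition tvd_obj n (y : 'I_n -> R) (lam : R) (theta : 'I_n -> R) : R :=
  2^-1 * (\sum_(i : 'I_n) (y i - theta i) ^+ 2)
  + lam * (\sum_(i : 'I_n | (i.+1 < n)%N) `|theta (insubd i i.+1) - theta i|).

Definition is_tvd_argmin n (y : 'I_n -> R) (lam : R) (theta : 'I_n -> R) : Prop :=
  forall t : 'I_n -> R, tvd_obj y lam theta <= tvd_obj y lam t.

(* The singleton interval [i:i] belongs to every index range below, so it is
   used as the (harmless) initial value of the iterated max / min. *)
Definition lower_bound n (y : 'I_n -> R) (lam : R) (i : 'I_n) : R :=
  let f I J := itv_mean y I + Cc I J * (2 * lam / (itv_len I)%:R) in
  let g J := \big[Num.min / f (i, i) J]_(I : itv n | in_itv i I && sub_itv I J) f I J in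
  \big[Num.max / g (i, i)]_(J : itv n | in_itv i J) g J.

Definition upper_bound n (y : 'I_n -> R) (lam : R) (i : 'I_n) : R :=
  let f I J := itv_mean y I - Cc I J * (2 * lam / (itv_len I)%:R) in
  let g J := \big[Num.max / f (i, i) J]_(I : itv n | in_itv i I && sub_itv I J) f I J in
  \big[Num.min / g (i, i)]_(J : itv n | in_itv i J) g J.
End Defs.

(* Main.v *)
Require Import Defs.
From HB Require Import structures.
From mathcomp Require Import all_boot all_order all_algebra.
From mathcomp Require Import reals.
From mathcomp Require Import ring lra zify.
Import Order.TTheory GRing.Theory Num.Theory.
Import Defs.
Local Open Scope ring_scope.

Lemma edge_id (R : realType) (u v e : R) (bK bk c1 c2 : bool) :
  (c1 -> bK && ~~ bk) -> (c2 -> bk && ~~ bK) -> (~~ c1 -> ~~ c2 -> bK = bk) ->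
  `|(u + (if bK then e else 0)) - (v + (if bk then e else 0))| - `|u - v| =
  (if c1 then `|u - v + e| - `|u - v| else 0) +
  (if c2 then `|u - v - e| - `|u - v| else 0).
Proof.
case: c1; case: c2; case: bK; case: bk => //= h1 h2 h3;
  try (by move: (h1 erefl)); try (by move: (h2 erefl));
  try (by have := h3 erefl erefl).
all: rewrite ?addr0 ?add0r.
- by congr (`|_| - _); ring.
- by congr (`|_| - _); ring.
- by rewrite (_ : u + e - (v + e) = u - v) ?subrr //; ring.
- by rewrite subrr.
Qed.

Lemma sum_single (R : realType) (T : finType) (P Q : pred T) (G : T -> R) :
  (forall j k, P j -> Q j -> P k -> Q k -> j = k) ->
  \sum_(k | P k) (if Q k then G k else 0) =
  if [pick k | P k && Q k] is Some k then G k else 0.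
Proof.
move=> uq; case: pickP => [k /andP[Pk Qk] | none].
  rewrite (bigD1 k) //= Qk big1 ?addr0 // => j /andP[Pj njk].
  case: ifP => // Qj; by rewrite (uq j k Pj Qj Pk Qk) eqxx in njk.
rewrite big1 // => j Pj; case: ifP => // Qj; by have := none j; rewrite Pj Qj.
Qed.

Lemma lim_le (R : realType) (S c K d : R) : 0 < d -> 0 <= K ->
  (forall e, 0 < e -> e <= d -> S <= c + e * K) -> S <= c.
Proof.
move=> d0 K0 H; rewrite leNgt; apply/negP => Sc.
pose e := Num.min d ((S - c) / (K + 1)).
have e0 : 0 < e by rewrite lt_min d0 divr_gt0 // ?subr_gt0 //; lra.
have ed : e <= d by rewrite ge_min lexx.
have eS : e <= (S - c) / (K + 1) by rewrite ge_min lexx orbT.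
have := H e e0 ed.
have : e * (K + 1) <= S - c by rewrite -ler_pdivlMr //; lra.
nra.
Qed.

Lemma max_itv (n' : nat) (P : pred 'I_n'.+1) (i : 'I_n'.+1) (J : itv n'.+1) : in_itv i J -> P i ->
  exists a b : nat, [/\ (J.1 <= a <= i)%N, (i <= b <= J.2)%N,
    (forall j : 'I_n'.+1, (a <= j <= b)%N -> P j),
    ((J.1 < a)%N -> ~~ P (inord a.-1)) & ((b < J.2)%N -> ~~ P (inord b.+1))].
Proof.
move=> /andP[J1i iJ2] Pi. have iltn := ltn_ord i. have J2n := ltn_ord J.2.
pose Qa k := (J.1 <= k)%N && [forall j : 'I_n'.+1, ((k <= j <= i)%N) ==> P j].
have Qai : Qa i.
  rewrite /Qa J1i /=; apply/forallP => j; apply/implyP => hj.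
  have -> : j = i by apply: val_inj => /=; lia.
  exact: Pi.
have exQa : exists k, Qa k by exists (nat_of_ord i).
case: (ex_minnP exQa) => a /andP[Ja /forallP Pa] mina.
pose Qb k := (k <= J.2)%N && [forall j : 'I_n'.+1, ((i <= j <= k)%N) ==> P j].
have Qbi : Qb i.
  rewrite /Qb iJ2 /=; apply/forallP => j; apply/implyP => hj.
  have -> : j = i by apply: val_inj => /=; lia.
  exact: Pi.
have exQb : exists k, Qb k by exists (nat_of_ord i).
have ubQb : forall k, Qb k -> (k <= J.2)%N by move=> k /andP[].
case: (ex_maxnP exQb ubQb) => b /andP[bJ /forallP Pb] maxb.
have ai := mina _ Qai.
have ib := maxb _ Qbi.
exists a, b; split.
- by rewrite Ja ai.
- by rewrite ib bJ.
- move=> j /andP[aj jb]; case: (leqP j i) => ji.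
    by apply: (implyP (Pa j)); rewrite aj ji.
  by apply: (implyP (Pb j)); rewrite (ltnW ji) jb.
- move=> Ja1; apply/negP => Pa1.
  have : Qa a.-1.
    rewrite /Qa; apply/andP; split; first lia.
    apply/forallP => j; apply/implyP => hj.
    case: (ltnP a.-1 j) => hj2.
      by apply: (implyP (Pa j)); apply/andP; split; lia.
    have -> : j = inord a.-1 by apply: val_inj => /=; rewrite inordK; lia.
    exact: Pa1.
  move=> /mina; lia.
- move=> bJ1; apply/negP => Pb1.
  have : Qb b.+1.
    rewrite /Qb; apply/andP; split; first lia.
    apply/forallP => j; apply/implyP => hj.
    case: (ltnP j b.+1) => hj2.
      by apply: (implyP (Pb j)); apply/andP; split; lia.
    have -> : j = inord b.+1 by apply: val_inj => /=; rewrite inordK; lia.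
    exact: Pb1.
  move=> /maxb; lia.
Qed.

Lemma count_itv (R : realType) (N a b : nat) : (a <= b)%N -> (b < N)%N ->
  \sum_(j : 'I_N | (a <= j <= b)%N) (1 : R) = ((b - a).+1)%:R.
Proof.
move=> ab bN.
rewrite -(big_mkord (fun j => (a <= j <= b)%N) (fun _ => (1:R))).
rewrite (big_cat_nat _ (n := a)) //=; last lia.
rewrite (big_cat_nat _ (m := a) (n := b.+1)) //=; last lia.
rewrite big_nat_cond big1; last by move=> j /= h; exfalso; lia.
rewrite add0r [X in _ + X]big_nat_cond [X in _ + X]big1; last by move=> j /= h; exfalso; lia.
rewrite addr0 big_nat_cond (eq_bigl (fun j => (a <= j < b.+1)%N && xpredT j)); last by move=> j /=; rewrite andbT; apply/idP/idP; lia.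
by rewrite -big_nat_cond sumr_const_nat; congr (_ %:R); lia.
Qed.
Section Main.
Variables (R : realType) (n' : nat).
Local Notation n := n'.+1.
Variables (y th : 'I_n -> R) (lam : R).
Hypothesis opt : is_tvd_argmin y lam th.

Definition dI (I : itv n) (e : R) (j : 'I_n) : R := if in_itv j I then e else 0.

Lemma insubdS (k : 'I_n) : (k.+1 < n)%N -> nat_of_ord (insubd k k.+1 : 'I_n) = k.+1.
Proof. by move=> h; rewrite insubdK. Qed.

Lemma perturb (I : itv n) (e : R) : (I.1 <= I.2)%N ->
  0 <= - e * (\sum_(j | in_itv j I) (y j - th j)) + e ^+ 2 / 2 * (\sum_(j | in_itv j I) (1 : R))
   + lam * (\sum_(k : 'I_n | (k.+1 < n)%N) (if k.+1 == I.1 then `|th (insubd k k.+1) - th k + e| - `|th (insubd k k.+1) - th k| else 0)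
          + \sum_(k : 'I_n | (k.+1 < n)%N) (if (k == I.2 :> nat) then `|th (insubd k k.+1) - th k - e| - `|th (insubd k k.+1) - th k| else 0)).
Proof.
move=> hI; have := opt (fun j => th j + dI I e j); rewrite /tvd_obj -subr_ge0.
set A := (X in 0 <= X -> _); set B := (X in _ -> 0 <= X).
suff -> : A = B by [].
rewrite /A /B {A B}.
rewrite (_ : forall a b c d : R, 2^-1 * a + lam * b - (2^-1 * c + lam * d) = 2^-1 * (a - c) + lam * (b - d)); last by move=> *; ring.
rewrite -!sumrB -big_split /=.
congr (_ + lam * _).
  rewrite (eq_bigr (fun j => if in_itv j I then -2 * e * (y j - th j) + e ^+ 2 * 1 else 0)); last first.
    by move=> j _; rewrite /dI; case: ifP => _; ring.
  rewrite -big_mkcond big_split /= -mulr_sumr -mulr_sumr; by field.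
apply: eq_bigr => k hk.
rewrite /dI; apply: edge_id.
- move=> /eqP h; rewrite /in_itv insubdS //; apply/andP; split; [lia|]. apply/negP; lia.
- move=> /eqP h; rewrite /in_itv insubdS //; apply/andP; split; [lia|]. apply/negP; lia.
- rewrite /in_itv insubdS // => /negP h1 /negP h2.
  apply/idP/idP; lia.
Qed.

Lemma lower_one (hl : 0 <= lam) (i : 'I_n) (J : itv n) : in_itv i J ->
  exists I : itv n, [&& in_itv i I, sub_itv I J &
     itv_mean y I + Cc R I J * (2 * lam / (itv_len I)%:R) <= th i].
Proof.
move=> iJ.
have [a [b [/andP[Ja ai] /andP[ib bJ] Pab La Rb]]] :=
  @max_itv n' (fun j : 'I_n => th j <= th i) i J iJ (lexx _).
have iltn := ltn_ord i; have J2n := ltn_ord J.2.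
have an : (a < n)%N by lia.
have bn : (b < n)%N by lia.
have a1n : (a.-1 < n)%N by lia.
have ab : (a <= b)%N by lia.
pose I : itv n := (inord a, inord b).
have I1 : nat_of_ord I.1 = a by rewrite /= inordK; lia.
have I2 : nat_of_ord I.2 = b by rewrite /= inordK; lia.
have inI : forall j : 'I_n, in_itv j I = (a <= j <= b)%N by move=> j; rewrite /in_itv I1 I2.
pose S := \sum_(j | in_itv j I) (y j - th j).
pose m := \sum_(j | in_itv j I) (1 : R).
pose cL : R := if (J.1 < a)%N then -1 else 1.
pose cR : R := if (b < J.2)%N then -1 else 1.
pose gL : R := if (J.1 < a)%N then th (inord a.-1) - th i else 1.
pose gR : R := if (b < J.2)%N then th (inord b.+1) - th i else 1.
have cLE : cL = if (J.1 < a)%N then -1 else 1 by [].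
have cRE : cR = if (b < J.2)%N then -1 else 1 by [].
have gLE : gL = if (J.1 < a)%N then th (inord a.-1) - th i else 1 by [].
have gRE : gR = if (b < J.2)%N then th (inord b.+1) - th i else 1 by [].
have SE : S = \sum_(j | in_itv j I) (y j - th j) by [].
have mE : m = \sum_(j | in_itv j I) (1 : R) by [].
clearbody S m cL cR gL gR I.
have gL0 : 0 < gL.
  rewrite gLE; case: ifP => h; last lra.
  by have := La h; rewrite /= -ltNge subr_gt0.
have gR0 : 0 < gR.
  rewrite gRE; case: ifP => h; last lra.
  by have := Rb h; rewrite /= -ltNge subr_gt0.
have m0 : 0 <= m by rewrite mE; apply: sumr_ge0.
have HS : S <= lam * (cL + cR).
  apply: (@lim_le R S _ (m / 2) (Num.min gL gR)).
  - by rewrite lt_min gL0 gR0.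
  - by rewrite divr_ge0.
  move=> e e0 ed.
  have edL : e <= gL by move: ed; rewrite le_min => /andP[].
  have edR : e <= gR by move: ed; rewrite le_min => /andP[].
  have hab : (I.1 <= I.2)%N by rewrite I1 I2; exact: leq_trans ai ib.
  have := perturb I e hab; rewrite -SE -mE.

  set SL := \sum_(k | _) (if _.+1 == _ then _ else _).
  set SR := \sum_(k | _) (if _ == _ then _ else _).
  have SLb : SL <= e * cL.
    rewrite /SL sum_single; last first.
      move=> j k _ /eqP hj _ /eqP hk; apply: ord_inj; move: hj hk; clear; lia.
    case: pickP => [k /andP[kn /eqP kI] | none].
    - rewrite I1 in kI; rewrite cLE; case: ifP => h.
      + have eK : insubd k k.+1 = inord a :> 'I_n.
          by apply: ord_inj; rewrite /= (insubdS k kn) (inordK an).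
        have ek : k = inord a.-1 :> 'I_n by apply: ord_inj; rewrite /= (inordK a1n) -kI.
        rewrite eK ek.
        have ha : th (inord a) <= th i by apply: Pab; rewrite (inordK an) leqnn ab.
        have hgl : gL = th (inord a.-1) - th i by rewrite gLE h.
        have h1 : th (inord a) - th (inord a.-1) + e <= 0 by lra.
        have h2 : th (inord a) - th (inord a.-1) <= 0 by lra.
        rewrite (ler0_norm h1) (ler0_norm h2); lra.
      + have := ler_normD (th (insubd k k.+1) - th k) e; rewrite (ger0_norm (ltW e0)); lra.
    - rewrite cLE; case: ifP => h; last lra.
      have a0 : (0 < a)%N := leq_ltn_trans (leq0n _) h.
      have := none (inord a.-1); rewrite /= (inordK a1n) I1 prednK // an eqxx //.
  have SRb : SR <= e * cR.
    rewrite /SR sum_single; last first.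
      move=> j k _ /eqP hj _ /eqP hk; apply: ord_inj; move: hj hk; clear; lia.
    case: pickP => [k /andP[kn /eqP kI] | none].
    - rewrite I2 in kI; rewrite cRE; case: ifP => h.
      + have b1n : (b.+1 < n)%N := leq_ltn_trans h J2n.
        have eK : insubd k k.+1 = inord b.+1 :> 'I_n.
          by apply: ord_inj; rewrite /= (insubdS k kn) (inordK b1n) kI.
        have ek : k = inord b :> 'I_n by apply: ord_inj; rewrite /= (inordK bn).
        rewrite eK ek.
        have hb : th (inord b) <= th i by apply: Pab; rewrite (inordK bn) leqnn ab.
        have hgr : gR = th (inord b.+1) - th i by rewrite gRE h.
        have h1 : 0 <= th (inord b.+1) - th (inord b) - e by lra.
        have h2 : 0 <= th (inord b.+1) - th (inord b) by lra.
        rewrite (ger0_norm h1) (ger0_norm h2); lra.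
      + have := ler_normD (th (insubd k k.+1) - th k) (- e).
        rewrite normrN (ger0_norm (ltW e0)); lra.
    - rewrite cRE; case: ifP => h; last lra.
      have b1n : (b.+1 < n)%N := leq_ltn_trans h J2n.
      have := none (inord b); rewrite /= (inordK bn) I2 b1n eqxx //.
  have hl2 : lam * (SL + SR) <= lam * (e * cL + e * cR) by apply: ler_wpM2l => //; lra.
  move=> H; rewrite -(ler_pM2l e0); lra.
have Ssplit : \sum_(j | in_itv j I) y j = S + \sum_(j | in_itv j I) th j.
  by rewrite SE sumrB subrK.
have Sth : \sum_(j | in_itv j I) th j <= th i * m.
  rewrite mE mulr_sumr; apply: ler_sum => j; rewrite inI => /Pab; by rewrite mulr1.
have mL : m = ((b - a).+1)%:R by rewrite mE (eq_bigl _ _ inI) count_itv.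
have L0 : 0 < m by rewrite mL ltr0Sn.
have key : lam * (cL + cR) + 2 * Cc R I J * lam <= 0.
  rewrite /Cc; case: eqP => [IJ | nIJ].
    by rewrite cLE cRE; case: ifP => _; case: ifP => _; lra.
  have nb : ~~ ((a == J.1) && (b == J.2)).
    apply/negP => /andP[/eqP h1 /eqP h2]; apply: nIJ.
    rewrite (surjective_pairing I) (surjective_pairing J); congr pair; apply: ord_inj.
      by rewrite I1.
    by rewrite I2.
  case: ifP => [/andP[h1 h2] | hn].
    rewrite !inI in h1 h2.
    have h3 : (J.1 < a)%N by move: h1 Ja ab; clear; lia.
    have h4 : (b < J.2)%N by move: h2 bJ ab Ja; clear; lia.
    rewrite cLE cRE h3 h4; lra.
  move/negbT: hn; rewrite negb_and !negbK !inI => hn.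
  rewrite cLE cRE; case: ifP => h; case: ifP => h'; try lra.
  exfalso; move/negbT: h; move/negbT: h'; move: nb hn Ja bJ ab; clear; lia.
exists I; apply/and3P; split.
- by rewrite inI ai ib.
- by rewrite /sub_itv I1 I2 Ja bJ.
rewrite /itv_mean /itv_len I1 I2 -mL.
set Sy := \sum_(j | in_itv j I) y j.
rewrite (_ : Sy / m + Cc R I J * (2 * lam / m) = (Sy + 2 * Cc R I J * lam) / m); last first.
  by field; rewrite lt0r_neq0.
rewrite ler_pdivrMr // /Sy Ssplit; lra.
Qed.
End Main.

Lemma neg_obj (R : realType) (n : nat) (y : 'I_n -> R) lam (u v : 'I_n -> R) :
  (forall j, v j = - u j) -> tvd_obj (fun j => - y j) lam v = tvd_obj y lam u.
Proof.
move=> hv; rewrite /tvd_obj; congr (_ * _ + _ * _); apply: eq_bigr => j _;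
  rewrite !hv (_ : forall a b : R, - a - - b = - (a - b)) ?normrN ?sqrrN //;
  move=> *; ring.
Qed.

Lemma neg_opt (R : realType) (n : nat) (y : 'I_n -> R) lam th :
  is_tvd_argmin y lam th -> is_tvd_argmin (fun j => - y j) lam (fun j => - th j).
Proof.
move=> H t; rewrite (@neg_obj R n y lam th) // (@neg_obj R n y lam (fun j => - t j)) //.
by move=> j; rewrite opprK.
Qed.

Lemma mean_neg (R : realType) (n : nat) (y : 'I_n -> R) I :
  itv_mean (fun j => - y j) I = - itv_mean y I.
Proof. by rewrite /itv_mean sumrN mulNr. Qed.

Lemma bigmin_le (R : realType) (T : finType) (P : pred T) (F : T -> R) x0 k0 :
  P k0 -> \big[Num.min / x0]_(k | P k) F k <= F k0.
Proof. by move=> Pk; rewrite (bigD1 k0) //= ge_min lexx. Qed.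

Lemma bigmax_ge (R : realType) (T : finType) (P : pred T) (F : T -> R) x0 k0 :
  P k0 -> F k0 <= \big[Num.max / x0]_(k | P k) F k.
Proof. by move=> Pk; rewrite (bigD1 k0) //= le_max lexx. Qed.

Theorem theorem1 (R : realType) (n : nat) (y : 'I_n -> R) (lam : R)
    (theta : 'I_n -> R) :
  (0 < n)%N -> 0 <= lam -> is_tvd_argmin y lam theta ->
  forall i : 'I_n, lower_bound y lam i <= theta i <= upper_bound y lam i.
Proof.
case: n y theta => [|n'] y theta //= _ hl opt i.
have gle : forall J : itv n'.+1, in_itv i J ->
    \big[Num.min / itv_mean y (i, i) + Cc R (i, i) J * (2 * lam / (itv_len (i, i))%:R)]_(I : itv n'.+1 | in_itv i I && sub_itv I J)
      (itv_mean y I + Cc R I J * (2 * lam / (itv_len I)%:R)) <= theta i.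
  move=> J hJ; have [I /and3P[h1 h2 h3]] := @lower_one R n' y theta lam opt hl i J hJ.
  by apply: le_trans h3; apply: bigmin_le; rewrite h1 h2.
have gge : forall J : itv n'.+1, in_itv i J ->
    theta i <= \big[Num.max / itv_mean y (i, i) - Cc R (i, i) J * (2 * lam / (itv_len (i, i))%:R)]_(I : itv n'.+1 | in_itv i I && sub_itv I J)
      (itv_mean y I - Cc R I J * (2 * lam / (itv_len I)%:R)).
  move=> J hJ; have [I /and3P[h1 h2 h3]] := @lower_one R n' _ _ lam (@neg_opt R _ y lam theta opt) hl i J hJ.
  have hF : theta i <= itv_mean y I - Cc R I J * (2 * lam / (itv_len I)%:R).
    by move: h3; rewrite mean_neg; lra.
  by apply: (le_trans hF); apply: bigmax_ge; rewrite h1 h2.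
have ii : in_itv i (i, i) by rewrite /in_itv /= leqnn.
apply/andP; split.
- rewrite /lower_bound /=; apply: (big_ind (fun x => x <= theta i)).
  + exact: gle.
  + by move=> x z hx hz; rewrite ge_max hx hz.
  + exact: gle.
- rewrite /upper_bound /=; apply: (big_ind (fun x => theta i <= x)).
  + exact: gge.
  + by move=> x z hx hz; rewrite le_min hx hz.
  + exact: gge.
Qed.
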